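(* Let $N=2^n$ and let $a,a'\in[0,N)$ be such that there exist indices $0\le u<w<n$ with $b_k(a)=b_k(a')$ for all $k\in[0,n)\setminus\{u,w\}$, $b_u(a)=b_w(a')=1$ and $b_w(a)=b_u(a')=0$. Then $\mathrm{w}(\mathbf{g}_a)=\mathrm{w}(\mathbf{g}_{a'})$ and $s^{(n)}_a>s^{(n)}_{a'}$.
   Context: All vectors are binary (over $GF(2)$), indices are zero-based. Let $G_N=\begin{pmatrix}1&0\\1&1\end{pmatrix}^{\otimes n}$ for $N=2^n$, with rows $\mathbf{g}_0,\ldots,\mathbf{g}_{N-1}$; $\mathrm{w}(\cdot)$ is Hamming weight. $S^{(n)}_{i,w}$ is the number of words of weight $w$ in $\mathbf{g}_i+\langle\mathbf{g}_{i+1},\ldots,\mathbf{g}_{N-1}\rangle$, and $s^{(n)}_i:=S^{(n)}_{i,\mathrm{w}(\mathbf{g}_i)}$ (the first nonzero entry of $(S^{(n)}_{i,w})_w$). For $i\in[0,N)$, $b_j(i)$ denotes the $j$-th bit of $i$, i.e. $i=\sum_{j=0}^{n-1}b_j(i)2^j$. *)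

(* Defs.v *)
From HB Require Import structures.
From mathcomp Require Import all_boot all_order all_algebra.
Unset Printing Implicit Defensive.
Import GRing.Theory.
Local Open Scope ring_scope.

(* The 2x2 kernel F = [[1,0],[1,1]] over GF(2), indexed by naturals 0,1. *)
Definition kerF (a b : nat) : 'F_2 := if (a == 0%N) && (b == 1%N) then 0 else 1.

(* Entry (i,j) of the Kronecker power F^{(x) n}, via the literal Kronecker
   product rule  (F (x) A)[(i1,i2),(j1,j2)] = F[i1,j1] * A[i2,j2]
   with row/column index i = i1 * 2^(n) + i2 (zero-based). *)
Fixpoint kronF (n i j : nat) : 'F_2 :=
  match n with
  | 0 => 1
  | m.+1 => kerF (i %/ 2 ^ m) (j %/ 2 ^ m) * kronF m (i %% 2 ^ m) (j %% 2 ^ m)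
  end.

Definition GN (n : nat) : 'M['F_2]_(2 ^ n) := \matrix_(i, j) kronF n i j.

Definition grow (n : nat) (i : 'I_(2 ^ n)) : 'rV['F_2]_(2 ^ n) := row i (GN n).

Definition wt {N : nat} (v : 'rV['F_2]_N) : nat := #|[set j : 'I_N | v 0 j != 0]|.

(* matrix whose row space is <g_{i+1}, ..., g_{N-1}> *)
Definition tailM (n : nat) (i : 'I_(2 ^ n)) : 'M['F_2]_(2 ^ n) :=
  \matrix_(k, l) (if (i < k)%N then GN n k l else 0).

(* S^{(n)}_{i,w} : number of words of weight w in g_i + <g_{i+1},...,g_{N-1}> *)
Definition Scount (n : nat) (i : 'I_(2 ^ n)) (w : nat) : nat :=
  #|[set v : 'rV['F_2]_(2 ^ n) | ((v - grow n i) <= tailM n i)%MS && (wt v == w)]|.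

Definition s_first (n : nat) (i : 'I_(2 ^ n)) : nat := Scount n i (wt (grow n i)).

Definition bitn (j i : nat) : bool := odd (i %/ 2 ^ j).

(* Main.v *)
Require Import Defs.
From mathcomp Require Import all_boot all_order all_algebra.
From mathcomp Require Import zify ring.

Lemma bitn_addmul t m x q : (t < m)%N -> bitn t (x + q * 2 ^ m) = bitn t x.
Proof.
move=> tm; rewrite /bitn.
have -> : (q * 2 ^ m = (q * 2 ^ (m - t)) * 2 ^ t)%N by rewrite -mulnA -expnD subnK // ltnW.
rewrite divnDMl ?expn_gt0 // oddD oddM oddX.
by rewrite subn_eq0 leqNgt tm /= andbF addbF.
Qed.

Lemma bitn_mod t m x : (t < m)%N -> bitn t (x %% 2 ^ m) = bitn t x.
Proof. by move=> tm; rewrite {2}(divn_eq x (2 ^ m)) addnC bitn_addmul. Qed.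

Lemma div_top m x : (x < 2 ^ m.+1)%N -> x %/ 2 ^ m = bitn m x.
Proof.
move=> xl; rewrite /bitn.
have : (x %/ 2 ^ m < 2)%N by rewrite ltn_divLR ?expn_gt0 // -expnS.
by case: (x %/ 2 ^ m) => [|[|]].
Qed.

Definition tonat (f : nat -> bool) n := (\sum_(t < n) f t * 2 ^ t)%N.

Lemma tonatS f n : tonat f n.+1 = (tonat f n + f n * 2 ^ n)%N.
Proof. by rewrite /tonat big_ord_recr. Qed.

Lemma tonat_lt f n : (tonat f n < 2 ^ n)%N.
Proof.
elim: n => [|n IH]; first by rewrite /tonat big_ord0.
rewrite tonatS expnS mul2n -addnn; have := leq_b1 (f n).
case: (f n) => _ /=; rewrite ?mul1n ?mul0n; lia.
Qed.

Lemma bitn_tonat f n s : (s < n)%N -> bitn s (tonat f n) = f s.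
Proof.
elim: n => [//|n IH] sn; rewrite tonatS.
case: (ltngtP s n) => [lt||]; first by rewrite bitn_addmul // IH.
  by move=> h; move: sn; rewrite ltnS leqNgt h.
move=> ->; rewrite /bitn divnDMl ?expn_gt0 // divn_small ?tonat_lt //.
by case: (f n).
Qed.

Lemma tonat_bits j n : (j < 2 ^ n)%N -> tonat (bitn^~ j) n = j.
Proof.
elim: n j => [|n IH] j jl.
  by rewrite /tonat big_ord0; move: jl; rewrite expn0; case: j.
rewrite tonatS.
have -> : tonat (bitn^~ j) n = tonat (bitn^~ (j %% 2 ^ n)) n.
  by apply: eq_bigr => t _; rewrite bitn_mod.
rewrite IH ?ltn_pmod ?expn_gt0 // -div_top // addnC -divn_eq //.
Qed.

Lemma bits_eq n i j : (i < 2 ^ n)%N -> (j < 2 ^ n)%N ->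
  (forall t, (t < n)%N -> bitn t i = bitn t j) -> i = j.
Proof.
move=> il jl h; rewrite -(@tonat_bits i n il) -(@tonat_bits j n jl).
by apply: eq_bigr => t _; rewrite h.
Qed.
Arguments div_top {m x}.

Import GRing.Theory.
Open Scope ring_scope.

Definition subb n i j := all (fun t => bitn t j ==> bitn t i) (iota 0 n).

Lemma subbP n i j : reflect (forall t, (t < n)%N -> bitn t j -> bitn t i) (subb n i j).
Proof.
apply: (iffP allP) => h t.
  by move=> tn bj; have := h t; rewrite mem_iota add0n tn => /(_ isT); rewrite bj.
by rewrite mem_iota add0n => /h; case: (bitn t j) => // /(_ isT) ->.
Qed.

Lemma subb_mod m i j : subb m (i %% 2 ^ m) (j %% 2 ^ m) = subb m i j.
Proof.
apply: eq_in_all => t; rewrite mem_iota add0n => tm.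
by rewrite !bitn_mod.
Qed.

Lemma kronE n i j : (i < 2 ^ n)%N -> (j < 2 ^ n)%N ->
  kronF n i j = if subb n i j then 1 else 0.
Proof.
elim: n i j => [|m IH] i j il jl; first by [].
rewrite /= (div_top il) (div_top jl) IH ?ltn_pmod ?expn_gt0 // subb_mod.
rewrite {2}/subb.
have -> : iota 0 m.+1 = iota 0 m ++ [:: m] by rewrite -addn1 iotaD.
rewrite all_cat /= andbT -/(subb m i j).
case: (subb m i j); case: (bitn m i); case: (bitn m j);
  by rewrite /kerF /= ?mul1r ?mul0r ?mulr0 ?mulr1 ?andbF.
Qed.

Lemma shift_sum (a : nat) (F : nat -> 'F_2) :
  \sum_(a <= j < a + a) F j = \sum_(0 <= j < a) F (j + a)%N.
Proof. by rewrite -{1}(add0n a) big_addn addnK. Qed.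

Lemma kronGG n i k : (i < 2 ^ n)%N -> (k < 2 ^ n)%N ->
  \sum_(j < 2 ^ n) kronF n i j * kronF n j k = if i == k then 1 else 0.
Proof.
elim: n i k => [|m IH] i k il kl.
  rewrite big_ord1 mulr1 /=; move: il kl; rewrite expn0.
  by case: i => // ?; case: k.
rewrite -(big_mkord xpredT (fun j => kronF m.+1 i j * kronF m.+1 j k)).
have e2 : (2 ^ m.+1 = 2 ^ m + 2 ^ m)%N by rewrite expnS mul2n addnn.
rewrite e2 (@big_cat_nat _ _ _ (2 ^ m)%N) ?leq_addr //.
rewrite shift_sum.
have h1 : \sum_(0 <= j < 2 ^ m) kronF m.+1 i j * kronF m.+1 j k =
   kerF (i %/ 2 ^ m) 0 * kerF 0 (k %/ 2 ^ m) *
   \sum_(0 <= j < 2 ^ m) kronF m (i %% 2 ^ m) j * kronF m j (k %% 2 ^ m).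
  rewrite big_distrr /=; apply: eq_big_nat => j /andP [_ jl] /=.
  rewrite (divn_small jl) (modn_small jl); ring.
have h2 : \sum_(0 <= j < 2 ^ m) kronF m.+1 i (j + 2 ^ m) * kronF m.+1 (j + 2 ^ m) k =
   kerF (i %/ 2 ^ m) 1 * kerF 1 (k %/ 2 ^ m) *
   \sum_(0 <= j < 2 ^ m) kronF m (i %% 2 ^ m) j * kronF m j (k %% 2 ^ m).
  rewrite big_distrr /=; apply: eq_big_nat => j /andP [_ jl] /=.
  have -> : ((j + 2 ^ m) %/ 2 ^ m = 1)%N.
    by rewrite addnC divnDl ?dvdnn // divnn expn_gt0 divn_small // addn0.
  rewrite modnDr (modn_small jl); ring.
rewrite h1 h2 big_mkord IH ?ltn_pmod ?expn_gt0 //.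
have -> : (i == k) = ((i %/ 2 ^ m == k %/ 2 ^ m) && (i %% 2 ^ m == k %% 2 ^ m))%N.
  apply/eqP/andP => [-> //|[/eqP e1 /eqP e2']].
  by rewrite (divn_eq i (2 ^ m)) (divn_eq k (2 ^ m)) e1 e2'.
rewrite (div_top il) (div_top kl).
case: (bitn m i); case: (bitn m k); case: (_ == _);
  rewrite /kerF /= ?mul1r ?mul0r ?mulr0 ?mulr1 ?add0r ?addr0 //.
by apply/eqP.
Qed.



Definition mkI n (f : nat -> bool) : 'I_(2 ^ n) := Ordinal (tonat_lt f n).
Definition tau (u w t : nat) : nat := if t == u then w else if t == w then u else t.
Definition sig n u w (j : 'I_(2 ^ n)) := mkI n (fun t => bitn (tau u w t) j).
Definition rho n u w (j : 'I_(2 ^ n)) := mkI n (fun t =>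
  if bitn u j then bitn t j else if t == w then ~~ bitn t j else bitn t j).
Arguments sig {n} u w j.
Arguments rho {n} u w j.

Definition permv N (s : 'I_N -> 'I_N) (v : 'rV['F_2]_N) : 'rV['F_2]_N :=
  \row_j v 0 (s j).
Arguments permv {N} s v.

Lemma bitn_mkI n f t : (t < n)%N -> bitn t (mkI n f) = f t.
Proof. exact: bitn_tonat. Qed.

Lemma ordI_eq n (i j : 'I_(2 ^ n)) :
  (forall t, (t < n)%N -> bitn t i = bitn t j) -> i = j.
Proof. by move=> h; apply: val_inj; exact: (@bits_eq n i j (ltn_ord i) (ltn_ord j)). Qed.

Lemma tauK u w t : tau u w (tau u w t) = t.
Proof.
rewrite /tau; case: (eqVneq t u) => [->|tu].
  by case: (eqVneq w u) => [->|wu]; rewrite ?eqxx.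
case: (eqVneq t w) => [->|tw]; first by rewrite eqxx.
by rewrite (negPf tu) (negPf tw).
Qed.

Lemma tau_lt n u w t : (u < n)%N -> (w < n)%N -> (t < n)%N -> (tau u w t < n)%N.
Proof. by rewrite /tau; case: (t == u) => //; case: (t == w). Qed.

Arguments tau_lt {n u w t}.

Lemma sigK n u w : (u < n)%N -> (w < n)%N -> involutive (@sig n u w).
Proof.
move=> un wn j; apply: ordI_eq => t tn.
by rewrite !bitn_mkI ?tau_lt // tauK.
Qed.

Arguments sigK {n u w}.

Lemma bitn_rho_u n u w (j : 'I_(2 ^ n)) : (u < n)%N -> u != w ->
  bitn u (rho u w j) = bitn u j.
Proof.
by move=> un uw; rewrite bitn_mkI //; case: (bitn u j); rewrite // (negPf uw).
Qed.

Lemma rhoK n u w : (u < n)%N -> u != w -> involutive (@rho n u w).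
Proof.
move=> un uw j; apply: ordI_eq => t tn.
rewrite [in LHS]bitn_mkI // bitn_rho_u //.
case bu: (bitn u j); rewrite bitn_mkI // bu //.
by case: (t == w) => //; rewrite negbK.
Qed.

Arguments rhoK {n u w}.

Lemma permvK N (s : 'I_N -> 'I_N) : involutive s -> involutive (permv s).
Proof. by move=> sK v; apply/rowP => j; rewrite !mxE sK. Qed.

Lemma permvD N (s : 'I_N -> 'I_N) v1 v2 :
  permv s (v1 + v2) = permv s v1 + permv s v2.
Proof. by apply/rowP => j; rewrite !mxE. Qed.

Lemma permvB N (s : 'I_N -> 'I_N) v1 v2 :
  permv s (v1 - v2) = permv s v1 - permv s v2.
Proof. by apply/rowP => j; rewrite !mxE. Qed.

Lemma wt_permv N (s : 'I_N -> 'I_N) v : injective s -> wt (permv s v) = wt v.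
Proof.
move=> si; rewrite /wt.
have -> : [set j | permv s v 0 j != 0] = s @^-1: [set j | v 0 j != 0].
  by apply/setP => j; rewrite !inE mxE.
exact: card_preimset.
Qed.

Lemma growE n (i j : 'I_(2 ^ n)) : grow n i 0 j = kronF n i j.
Proof. by rewrite /grow !mxE. Qed.

Lemma kron_sig n u w (i j : 'I_(2 ^ n)) : (u < n)%N -> (w < n)%N ->
  kronF n (sig u w i) (sig u w j) = kronF n i j.
Proof.
move=> un wn; rewrite !kronE ?ltn_ord //; congr (if _ then _ else _).
apply/subbP/subbP => h t tn.
  have := h (tau u w t) (tau_lt un wn tn).
  by rewrite !bitn_mkI ?tau_lt // tauK.
by rewrite !bitn_mkI //; apply: h; apply: tau_lt.
Qed.

Lemma permv_grow n u w (i : 'I_(2 ^ n)) : (u < n)%N -> (w < n)%N ->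
  permv (@sig n u w) (grow n i) = grow n (sig u w i).
Proof.
move=> un wn; apply/rowP => j; rewrite mxE !growE.
by rewrite -{1}(sigK un wn i) kron_sig.
Qed.



Lemma sum2 n u w (F : nat -> nat) : (u < n)%N -> (w < n)%N -> u != w ->
  (\sum_(t < n) F t = F u + F w + \sum_(t < n | (nat_of_ord t != u) && (nat_of_ord t != w)) F t)%N.
Proof.
move=> un wn uw.
rewrite (bigD1 (Ordinal un)) //= (bigD1 (Ordinal wn)) /=; last first.
  by rewrite -val_eqE /= eq_sym.
by rewrite addnA; congr (_ + _)%N.
Qed.

Arguments sum2 {n u w}.

Lemma sig_arith n u w (j : 'I_(2 ^ n)) : (u < n)%N -> (w < n)%N -> u != w ->
  (sig u w j + bitn u j * 2 ^ u + bitn w j * 2 ^ w =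
   j + bitn w j * 2 ^ u + bitn u j * 2 ^ w)%N.
Proof.
move=> un wn uw.
rewrite /= /tonat (sum2 (fun t => bitn (tau u w t) j * 2 ^ t)%N un wn uw).
have ej := @tonat_bits j n (ltn_ord j).
rewrite /tonat (sum2 (fun t => bitn t j * 2 ^ t)%N un wn uw) in ej.
have -> : (\sum_(t < n | (nat_of_ord t != u) && (nat_of_ord t != w)) (bitn (tau u w t) j * 2 ^ t) =
          \sum_(t < n | (nat_of_ord t != u) && (nat_of_ord t != w)) (bitn t j * 2 ^ t))%N.
  by apply: eq_bigr => t /andP [tu tw]; rewrite /tau (negPf tu) (negPf tw).
rewrite /tau eqxx eq_sym (negPf uw) eqxx.
move: ej; set S := \sum_(_ < _ | _) _.
set p1 := (bitn u j * 2 ^ u)%N; set p2 := (bitn w j * 2 ^ w)%N.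
set p3 := (bitn w j * 2 ^ u)%N; set p4 := (bitn u j * 2 ^ w)%N.
lia.
Qed.

Arguments sig_arith {n u w} j.

Lemma tail_perm n u w (a a' : 'I_(2 ^ n)) (x : 'rV['F_2]_(2 ^ n)) :
  (u < n)%N -> (w < n)%N ->
  (forall k : 'I_(2 ^ n), (a' < k)%N -> (a < sig u w k)%N) ->
  (x <= tailM n a')%MS -> (permv (sig u w) x <= tailM n a)%MS.
Proof.
move=> un wn hlt /submxP [D ->]; apply/submxP.
exists (\row_k (if (a' < sig u w k)%N then D 0 (sig u w k) else 0)).
apply/rowP => j; rewrite !mxE.
rewrite (reindex_inj (can_inj (sigK un wn))).
apply: eq_bigr => k _; rewrite /tailM !mxE.
case hk: (a' < sig u w k)%N; first last.
  by rewrite mulr0 mul0r.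
have := hlt _ hk; rewrite sigK // => ->.
by rewrite kron_sig.
Qed.

Lemma not_sub n (a a' : 'I_(2 ^ n)) : (a < a')%N -> ~~ (grow n a <= tailM n a')%MS.
Proof.
move=> aa; apply/negP => /submxP [D hD].
have h1 : (grow n a *m GN n) 0 a = 1.
  rewrite mxE; under eq_bigr => j _ do rewrite growE mxE.
  by rewrite kronGG ?ltn_ord // eqxx.
move: h1; rewrite hD -mulmxA mxE big1 ?(@oner_eq0 'F_2) //.
move=> k _; rewrite mxE.
under eq_bigr => j _ do rewrite /tailM !mxE.
case hk: (a' < k)%N; last by rewrite big1 ?mulr0 // => j _; rewrite mul0r.
rewrite kronGG ?ltn_ord //; case: eqP => [e|_]; last by rewrite mulr0.
by move: hk; rewrite e ltnNge ltnW.
Qed.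

Lemma rho_grow n u w (a a' : 'I_(2 ^ n)) : (u < n)%N -> (w < n)%N -> u != w ->
  (forall k, (k < n)%N -> k != u -> k != w -> bitn k a = bitn k a') ->
  bitn u a = true -> bitn w a' = true ->
  bitn w a = false -> bitn u a' = false ->
  grow n a + grow n a' = permv (rho u w) (grow n a).
Proof.
move=> un wn uw Hk hua hwa' hwa hua'.
apply/rowP => j; rewrite !mxE.
rewrite !kronE ?ltn_ord //.
have Ho : forall t, (t < n)%N -> t != w -> bitn t (rho u w j) = bitn t j.
  by move=> t tn tw; rewrite bitn_mkI //; case: (bitn u j); rewrite // (negPf tw).
have Hw : bitn w (rho u w j) = if bitn u j then bitn w j else ~~ bitn w j.
  by rewrite bitn_mkI // eqxx.
case bu: (bitn u j).
  have -> : rho u w j = j.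
    apply: ordI_eq => t tn; case: (eqVneq t w) => [->|tw]; first by rewrite Hw bu.
    exact: Ho.
  have -> : subb n a' j = false.
    by apply/negbTE/subbP => h; have := h u un bu; rewrite hua'.
  by rewrite addr0.
case bw: (bitn w j).
  have -> : subb n a j = false.
    by apply/negbTE/subbP => h; have := h w wn bw; rewrite hwa.
  have -> : subb n a' j = subb n a (rho u w j).
    apply/subbP/subbP => h t tn bt.
      case: (eqVneq t w) => [e|tw]; first by move: bt; rewrite e Hw bu bw.
      rewrite Ho // in bt; case: (eqVneq t u) => [e|tu]; first by move: bt; rewrite e bu.
      by rewrite Hk // h.
    case: (eqVneq t w) => [->//|tw].
    case: (eqVneq t u) => [e|tu]; first by move: bt; rewrite e bu.
    by rewrite -Hk // h // Ho.
  by rewrite add0r.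
have -> : subb n a (rho u w j) = false.
  by apply/negbTE/subbP => h; have := h w wn; rewrite Hw bu bw hwa => /(_ isT).
have -> : subb n a' j = subb n a j.
  apply/subbP/subbP => h t tn bt.
    case: (eqVneq t w) => [e|tw]; first by move: bt; rewrite e bw.
    case: (eqVneq t u) => [e|tu]; first by move: bt; rewrite e bu.
    by rewrite Hk // h.
  case: (eqVneq t w) => [e|tw]; first by move: bt; rewrite e bw.
  case: (eqVneq t u) => [e|tu]; first by move: bt; rewrite e bu.
  by rewrite -Hk // h.
by case: (subb n a j); apply/eqP.
Qed.

Arguments tail_perm {n u w a a' x}.
Arguments rho_grow {n u w a a'}.
Arguments not_sub {n a a'}.
Arguments permvK {N s}.

Theorem mainTheorem4 (n : nat) (a a' : 'I_(2 ^ n)) (u w : nat) :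
  (u < w)%N -> (w < n)%N ->
  (forall k, (k < n)%N -> k != u -> k != w -> bitn k a = bitn k a') ->
  bitn u a = true -> bitn w a' = true ->
  bitn w a = false -> bitn u a' = false ->
  wt (grow n a) = wt (grow n a') /\ (s_first n a' < s_first n a)%N.
Proof.
move=> uw wn Hk hua hwa' hwa hua'.
have un : (u < n)%N := ltn_trans uw wn.
have uw' : u != w := negbT (ltn_eqF uw).
have Hsa : sig u w a' = a.
  apply: ordI_eq => t tn; rewrite bitn_mkI // /tau.
  case: (eqVneq t u) => [->|tu]; first by rewrite hwa' hua.
  case: (eqVneq t w) => [->|tw]; first by rewrite hua' hwa.
  by rewrite Hk.
have Hsa2 : sig u w a = a' by rewrite -Hsa sigK.
have Hg' : permv (sig u w) (grow n a') = grow n a by rewrite permv_grow // Hsa.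
have Hg : permv (sig u w) (grow n a) = grow n a' by rewrite permv_grow // Hsa2.
have Hwt : wt (grow n a) = wt (grow n a').
  by rewrite -Hg' wt_permv //; exact: (can_inj (sigK un wn)).
split => //.
have ar := sig_arith a' un wn uw'.
rewrite Hsa hua' hwa' /= mul0n mul1n addn0 in ar.
have pw : (2 ^ u < 2 ^ w)%N by rewrite ltn_exp2l.
have aa : (a < a')%N by lia.
have hlt : forall k : 'I_(2 ^ n), (a' < k)%N -> (a < sig u w k)%N.
  move=> k hk; have := sig_arith k un wn uw'.
  by case: (bitn u k); case: (bitn w k); rewrite /= ?mul0n ?mul1n ?addn0 => e; lia.
rewrite /s_first /Scount Hwt.
set A' := [set v | ((v - grow n a') <= tailM n a')%MS && (wt v == wt (grow n a'))].
set A := [set v | ((v - grow n a) <= tailM n a)%MS && (wt v == wt (grow n a'))].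
set z := grow n a + grow n a'.
have Pinj : injective (permv (sig u w)) := can_inj (permvK (sigK un wn)).
have sub : z |: (permv (sig u w)) @: A' \subset A.
  apply/subsetP => v; rewrite in_setU1 => /orP [/eqP -> | /imsetP [x xA ->]].
    rewrite inE; apply/andP; split.
      rewrite /z (addrC (grow n a)) addrK.
      have <- : row a' (tailM n a) = grow n a'.
        by apply/rowP => j; rewrite /tailM /grow !mxE aa.
      exact: row_sub.
    rewrite /z (rho_grow un wn uw' Hk hua hwa' hwa hua') wt_permv ?Hwt //.
    exact: (can_inj (rhoK un uw')).
  rewrite inE in xA; case/andP: xA => x1 x2; rewrite inE; apply/andP; split.
    by rewrite -Hg' -permvB; exact: (tail_perm un wn hlt x1).
  by rewrite (wt_permv _ _ _ (can_inj (sigK un wn))).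
have nz : z \notin (permv (sig u w)) @: A'.
  apply/imsetP => [[x xA zx]].
  have ex : x = grow n a' + grow n a.
    by rewrite -(permvK (sigK un wn) x) -zx /z permvD Hg Hg'.
  rewrite inE in xA; case/andP: xA => x1 _.
  move: x1; rewrite ex (addrC (grow n a')) addrK.
  by apply/negP; apply: not_sub.
have := subset_leq_card sub.
by rewrite cardsU1 nz card_imset.
Qed.
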